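(* For every integer $t\ge1$, $C_5[E_{2t-1}]\rightarrow(K_{t,t},K_{t,t})^v$; consequently $F_v(K_{t,t},K_{t,t};3)\le 10t-5$.
   Context: All graphs are finite and simple. $E_s$ is the edgeless graph on $s$ vertices, $C_5$ the 5-cycle, $K_{t,t}$ the complete bipartite graph with parts of size $t$. The lexicographic product $G[H]$ has vertex set $V(G)\times V(H)$, with $\{(u_1,v_1),(u_2,v_2)\}$ an edge iff $\{u_1,u_2\}\in E(G)$, or $u_1=u_2$ and $\{v_1,v_2\}\in E(H)$. ''A graph $F$ contains $H$'' means $F$ has a (not necessarily induced) subgraph isomorphic to $H$. $G\rightarrow(H_1,H_2)^v$ means: for every partition $V(G)=X_1\cup X_2$ there is $i$ such that the subgraph induced by $X_i$ contains $H_i$. $F_v(H_1,H_2;k)$ is the minimum number of vertices of a $K_k$-free graph $G$ with $G\rightarrow(H_1,H_2)^v$. *)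

(* Defs.v *)
From mathcomp Require Import all_boot.
Set Implicit Arguments. Unset Strict Implicit. Unset Printing Implicit Defensive.

Record sgraph := SGraph {
  vert :> finType;
  adj : rel vert;
  adj_sym : symmetric adj;
  adj_irr : irreflexive adj }.

Definition contains_in (F : sgraph) (X : {set F}) (H : sgraph) : Prop :=
  exists f : H -> F, injective f /\ (forall x, f x \in X) /\
    (forall x y, adj x y -> adj (f x) (f y)).

Definition contains (F H : sgraph) : Prop := contains_in [set: F] H.

Definition varrows (G H1 H2 : sgraph) : Prop :=
  forall X : {set G}, contains_in X H1 \/ contains_in (~: X) H2.

Lemma K_sym k : symmetric (fun i j : 'I_k => i != j).
Proof. by move=> i j; rewrite eq_sym. Qed.
Lemma K_irr k : irreflexive (fun i j : 'I_k => i != j).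
Proof. by move=> i; rewrite eqxx. Qed.
Definition Kn (k : nat) : sgraph := SGraph (@K_sym k) (@K_irr k).

Lemma E_sym s : symmetric (fun i j : 'I_s => false). Proof. by []. Qed.
Lemma E_irr s : irreflexive (fun i j : 'I_s => false). Proof. by []. Qed.
Definition En (s : nat) : sgraph := SGraph (@E_sym s) (@E_irr s).

Definition C5adj (i j : 'I_5) : bool :=
  (j == (i.+1 %% 5) :> nat) || (i == (j.+1 %% 5) :> nat).
Lemma C5_sym : symmetric C5adj. Proof. by move=> i j; rewrite /C5adj orbC. Qed.
Lemma C5_irr : irreflexive C5adj. Proof. by case=> [[|[|[|[|[|]]]]] ?]. Qed.
Definition C5 : sgraph := SGraph C5_sym C5_irr.

Definition Kttadj t (x y : bool * 'I_t) : bool := x.1 != y.1.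
Lemma Ktt_sym t : symmetric (@Kttadj t). Proof. by move=> x y; rewrite /Kttadj eq_sym. Qed.
Lemma Ktt_irr t : irreflexive (@Kttadj t). Proof. by move=> x; rewrite /Kttadj eqxx. Qed.
Definition Ktt (t : nat) : sgraph := SGraph (@Ktt_sym t) (@Ktt_irr t).

Definition lexadj (G H : sgraph) (x y : G * H) : bool :=
  adj x.1 y.1 || ((x.1 == y.1) && adj x.2 y.2).
Lemma lex_sym G H : symmetric (@lexadj G H).
Proof. by move=> x y; rewrite /lexadj adj_sym [y.1 == _]eq_sym [adj y.2 _]adj_sym. Qed.
Lemma lex_irr G H : irreflexive (@lexadj G H).
Proof. by move=> x; rewrite /lexadj !adj_irr andbF. Qed.
Definition lexprod (G H : sgraph) : sgraph := SGraph (@lex_sym G H) (@lex_irr G H).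

(* "F_v(H1,H2;k) <= n": some K_k-free graph on at most n vertices arrows (H1,H2)^v
   (equivalent to min <= n). *)
Definition Fv_le (H1 H2 : sgraph) (k n : nat) : Prop :=
  exists G : sgraph, #|G| <= n /\ ~ contains G (Kn k) /\ varrows G H1 H2.

(* Main.v *)
Require Import Defs.
From mathcomp Require Import all_boot.
From mathcomp Require Import zify.

Set Implicit Arguments. Unset Strict Implicit. Unset Printing Implicit Defensive.

Definition succ5 (i : 'I_5) : 'I_5 := Ordinal (ltn_pmod i.+1 (erefl true : 0 < 5)).

Lemma C5adj_succ (i : 'I_5) : C5adj i (succ5 i).
Proof. by rewrite /C5adj /= eqxx. Qed.

Lemma odd_cycle (c : 'I_5 -> bool) : exists i, c i = c (succ5 i).
Proof.
have [/existsP [i /eqP Hi]|H] := boolP [exists i, c i == c (succ5 i)].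
  by exists i.
exfalso.
have H' : forall i, c (succ5 i) = ~~ c i.
  move=> i; move/existsPn: H => /(_ i).
  by case: (c i); case: (c (succ5 i)).
have E : succ5 (succ5 (succ5 (succ5 (succ5 ord0)))) = ord0 by apply: val_inj.
have := H' (succ5 (succ5 (succ5 (succ5 ord0)))).
rewrite E !H'. by case: (c ord0).
Qed.

Lemma C5_tri (a b c : 'I_5) : C5adj a b -> C5adj b c -> C5adj a c -> False.
Proof.
by case: a => [[|[|[|[|[|a]]]]] Ha] //; case: b => [[|[|[|[|[|b]]]]] Hb] //;
  case: c => [[|[|[|[|[|c]]]]] Hc].
Qed.

Lemma inj_into (T : finType) (A : {set T}) (t : nat) : t <= #|A| ->
  exists g : 'I_t -> T, injective g /\ forall k, g k \in A.
Proof.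
move=> H; exists (fun k => enum_val (widen_ord H k)); split.
  by move=> x y /enum_val_inj /(congr1 val) /= Hxy; apply: val_inj.
by move=> k; apply: enum_valP.
Qed.

Section Emb.
Variable s t : nat.
Let G := lexprod C5 (En s).

Lemma embed (Y : {set G}) (i : 'I_5) :
  t <= #|[set j : 'I_s | ((i, j) : G) \in Y]| ->
  t <= #|[set j : 'I_s | ((succ5 i, j) : G) \in Y]| ->
  contains_in Y (Ktt t).
Proof.
move=> /inj_into [g [ig Hg]] /inj_into [h [ih Hh]].
have ne : i != succ5 i.
  apply/negP => /eqP E. have := C5adj_succ i. by rewrite -E C5_irr.
exists (fun x : bool * 'I_t => if x.1 then ((succ5 i, h x.2) : G) else ((i, g x.2) : G)).
split; last split.
- move=> [[] x] [[] y] /= E.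
  + by case: E => /ih ->.
  + by case: E => E; first [by rewrite E eqxx in ne | by rewrite -E eqxx in ne].
  + by case: E => E; first [by rewrite E eqxx in ne | by rewrite -E eqxx in ne].
  + by case: E => /ig ->.
- move=> [[] x] /=.
  + by have := Hh x; rewrite inE.
  + by have := Hg x; rewrite inE.
- move=> [[] x] [[] y]; rewrite /= /Kttadj //= => _; rewrite /lexadj /=.
  + by rewrite C5_sym C5adj_succ.
  + by rewrite C5adj_succ.
Qed.
End Emb.

Lemma numL n t : (t <= n) = false -> n <= 2 * t - 1 -> t <= 2 * t - 1 - n.
Proof. move=> H1 H2. have := negbT H1. lia. Qed.

Theorem mainTheorem8 (t : nat) : 1 <= t ->
  varrows (lexprod C5 (En (2 * t - 1))) (Ktt t) (Ktt t) /\
  Fv_le (Ktt t) (Ktt t) 3 (10 * t - 5).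
Proof.
move=> t1.
have V : varrows (lexprod C5 (En (2 * t - 1))) (Ktt t) (Ktt t).
  move=> X.
  set s := 2 * t - 1.
  pose A (i : 'I_5) := [set j : 'I_s | ((i, j) : lexprod C5 (En s)) \in X].
  have [i Hi] := odd_cycle (fun i => t <= #|A i|).
  have compl : forall i, #|[set j : 'I_s | ((i, j) : lexprod C5 (En s)) \in ~: X]|
                 = s - #|A i|.
    move=> k.
    have -> : [set j : 'I_s | ((k, j) : lexprod C5 (En s)) \in ~: X] = ~: A k.
      by apply/setP => j; rewrite !inE.
    have E3 : #|A k| + #|~: A k| = s by rewrite cardsC card_ord.
    lia.
  case Ht: (t <= #|A i|).
    left; apply: (@embed s t X i) => //. by rewrite -/(A i) -Hi.
  right; apply: (@embed s t (~: X) i); rewrite compl /s.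
    apply: numL; first exact: Ht.
    by rewrite -[X in _ <= X]card_ord max_card.
  apply: numL.
    etransitivity; [symmetry; exact: Hi | exact: Ht].
  by rewrite -[X in _ <= X]card_ord max_card.
split; first exact: V.
exists (lexprod C5 (En (2 * t - 1))); split; last split.
- rewrite card_prod !card_ord /=. lia.
- move=> [f [_ [_ Hf]]].
  have h01 := Hf (@Ordinal 3 0 isT) (@Ordinal 3 1 isT) isT.
  have h12 := Hf (@Ordinal 3 1 isT) (@Ordinal 3 2 isT) isT.
  have h02 := Hf (@Ordinal 3 0 isT) (@Ordinal 3 2 isT) isT.
  move: h01 h12 h02; rewrite /= /lexadj /= !andbF !orbF.
  exact: C5_tri.
- exact: V.
Qed.
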